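(* Let $q$ be a prime power such that none of $q-1$, $q$, $q+1$ is a power of $2$ (i.e. $\{q-1,q,q+1\}\cap\{2^k : k\in\mathbb{N}\}=\varnothing$), and let $G=\mathrm{SL}(2,q)$. If $x$ is a $2$-element of $G$, then $q-1$ or $q+1$ divides $|C_G(x)|$. In particular, $C_G(x)$ is not a $2$-group. *)

(* Defs.v *)
From HB Require Import structures.
From mathcomp Require Import all_boot all_order all_algebra all_fingroup all_solvable all_field.
Set Implicit Arguments. Unset Strict Implicit. Unset Printing Implicit Defensive.
Import GRing.Theory.
Local Open Scope group_scope.

Section SL2.
Variable F : finFieldType.

Definition SL2set : {set {'GL_2[F]}} := [set g : {'GL_2[F]} | (\det (GLval g) == 1)%R].

Lemma SL2_group_set : group_set SL2set.
Proof.
apply/group_setP; split.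
  by rewrite inE GL_1E det1.
move=> x y; rewrite !inE => /eqP dx /eqP dy.
by rewrite GL_MxE det_mulmx dx dy mulr1.
Qed.

Canonical SL2_group := Group SL2_group_set.
End SL2.

Notation SL2 F := (SL2_group F).

(* Main.v *)
Require Import Defs.
From HB Require Import structures.
From mathcomp Require Import all_boot all_order all_algebra all_fingroup all_solvable all_field.
From mathcomp Require Import ring zify.
Set Implicit Arguments. Unset Strict Implicit. Unset Printing Implicit Defensive.
Import GRing.Theory FinRing.Theory.
Section Aux.
Variable F : finFieldType.
Local Open Scope ring_scope.
Implicit Types A B Y : 'M[F]_2.
Lemma det2 A : \det A = A 0 0 * A 1 1 - A 0 1 * A 1 0.
Proof.
rewrite (expand_det_row _ 0) !big_ord_recl big_ord0 addr0 /cofactor !det_mx11 /=.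
rewrite !mxE /=.
have -> : (lift 0 (0 : 'I_1)) = 1 :> 'I_2 by apply/val_inj.
have -> : (lift 1 (0 : 'I_1)) = 0 :> 'I_2 by apply/val_inj.
have -> : (ord0 : 'I_2) = 0 by apply/val_inj.
rewrite /bump /= !add0n expr0 expr1 mul1r mulN1r mulrN. reflexivity. Qed.

Lemma tr2 A : \tr A = A 0 0 + A 1 1.
Proof.
rewrite /mxtrace !big_ord_recl big_ord0 addr0.
have -> : (lift ord0 (ord0 : 'I_1)) = 1 :> 'I_2 by apply/val_inj.
by have -> : (ord0 : 'I_2) = 0 by apply/val_inj.
Qed.

Lemma ord2 (i : 'I_2) : i = 0 \/ i = 1.
Proof. case: i => [[|[|//]]] Hi; [left|right]; exact/val_inj. Qed.

Lemma mx2P A B : A 0 0 = B 0 0 -> A 0 1 = B 0 1 -> A 1 0 = B 1 0 -> A 1 1 = B 1 1 -> A = B.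
Proof.
move=> h00 h01 h10 h11; apply/matrixP => i j.
by case: (ord2 i) => ->; case: (ord2 j) => ->.
Qed.

Lemma mul2E A B i j : (A *m B) i j = A i 0 * B 0 j + A i 1 * B 1 j.
Proof.
rewrite !mxE !big_ord_recl big_ord0 addr0.
have -> : (lift ord0 (ord0 : 'I_1)) = 1 :> 'I_2 by apply/val_inj.
by have -> : (ord0 : 'I_2) = 0 by apply/val_inj.
Qed.

Lemma detM2 Y a b : \det (a%:M + b *: Y) = a^+2 + a*b*\tr Y + b^+2 * \det Y.
Proof. rewrite !det2 tr2 !mxE /=. ring. Qed.

Lemma mulM2 Y a b c e : (a%:M + b*:Y) *m (c%:M + e*:Y) =
   (a*c - b*e*\det Y)%:M + (a*e + c*b + b*e*\tr Y) *: Y.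
Proof. rewrite det2 tr2; apply: mx2P; rewrite !mul2E !mxE /=; ring. Qed.

Lemma commM2 Y a b : (a%:M + b*:Y) *m Y = Y *m (a%:M + b*:Y).
Proof. apply: mx2P; rewrite !mul2E !mxE /=; ring. Qed.

Lemma CH2 Y : Y *m Y = \tr Y *: Y - (\det Y)%:M.
Proof. rewrite det2 tr2; apply: mx2P; rewrite !mul2E !mxE /=; ring. Qed.

Lemma scalar2 Y : Y 0 1 = 0 -> Y 1 0 = 0 -> Y 0 0 = Y 1 1 -> Y = (Y 0 0)%:M.
Proof. by move=> h1 h2 h3; apply: mx2P; rewrite !mxE //= h3. Qed.

Section Key.
Variable Y : 'M[F]_2.
Hypothesis nsY : forall c, Y != c%:M.

Definition Mab (ab : F * F) : 'M[F]_2 := ab.1%:M + ab.2 *: Y.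
Definition Nf (ab : F * F) : F := ab.1^+2 + ab.1*ab.2*\tr Y + ab.2^+2 * \det Y.

Lemma Mab_inj : injective Mab.
Proof.
move=> [a b] [a' b'] /matrixP E.
have e00 := E 0 0; have e01 := E 0 1; have e10 := E 1 0; have e11 := E 1 1.
move: e00 e01 e10 e11; rewrite !mxE /= !mulr1n !mulr0n !add0r.
move=> e00 e01 e10 e11.
have bb : b = b'.
  apply/eqP; apply/negPn/negP => nb.
  have nb' : b - b' != 0 by rewrite subr_eq0.
  have cancel0 : forall z, (b - b') * z = 0 -> z = 0.
    by move=> z /eqP; rewrite mulf_eq0 (negbTE nb') /= => /eqP.
  have y01 : Y 0 1 = 0 by apply: cancel0; rewrite mulrBl e01 subrr.
  have y10 : Y 1 0 = 0 by apply: cancel0; rewrite mulrBl e10 subrr.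
  have y11 : Y 0 0 = Y 1 1.
    apply/eqP; rewrite -subr_eq0; apply/eqP; apply: cancel0.
      have : (a + b * Y 0 0) - (a + b * Y 1 1) = (a' + b' * Y 0 0) - (a' + b' * Y 1 1).
        by rewrite e00 e11.
      move=> h; rewrite -[RHS](subrr ((a + b * Y 0 0) - (a + b * Y 1 1))).
      rewrite {2}h. ring.
  by move: (nsY (Y 0 0)); rewrite {1}(scalar2 y01 y10 y11) eqxx.
subst b'; congr (_, _).
by move: e00; move/addIr.
Qed.

Lemma detMab ab : \det (Mab ab) = Nf ab.
Proof. exact: detM2. Qed.

Definition Sset : {set {'GL_2[F]}} := [set g : {'GL_2[F]} | [exists ab, GLval g == Mab ab]].

Lemma S_group_set : group_set Sset.
Proof.
apply/group_setP; split.
  rewrite inE; apply/existsP; exists (1, 0); rewrite GL_1E /Mab /= scale0r addr0.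
  by rewrite idmxE.
move=> g h; rewrite !inE => /existsP[u /eqP gu] /existsP[v /eqP hv].
apply/existsP; exists (u.1*v.1 - u.2*v.2*\det Y, u.1*v.2 + v.1*u.2 + u.2*v.2*\tr Y).
by rewrite GL_MxE gu hv /Mab mulM2.
Qed.
Canonical S_group := Group S_group_set.

Definition Pset := [set ab : F * F | Nf ab != 0].
Definition hmap ab : {'GL_2[F]} := insubd (1%g : {'GL_2[F]}) (Mab ab).

Lemma hmapK ab : Nf ab != 0 -> GLval (hmap ab) = Mab ab.
Proof. by move=> nz; rewrite /hmap insubdK // unitmxE unitfE detMab. Qed.

Lemma card_S : #|Sset| = #|Pset|.
Proof.
have -> : Sset = hmap @: Pset.
  apply/setP => g; rewrite inE; apply/existsP/imsetP.
    case=> ab /eqP gab.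
    have nz : Nf ab != 0 by rewrite -detMab -gab; move: (GL_det g). 
    by exists ab; rewrite ?inE //; apply: val_inj; rewrite /= hmapK.
  by case=> ab; rewrite inE => nz ->; exists ab; rewrite hmapK.
apply: card_in_imset => u v; rewrite !inE => nu nv huv; apply: Mab_inj.
by rewrite -hmapK // -[RHS]hmapK // huv.
Qed.

Definition Rset := [set z : F | z^+2 + z * \tr Y + \det Y == 0].
Definition Zset := [set ab : F * F | Nf ab == 0].

Lemma Zset_eq : Zset = (0,0) |: [set (u.1*u.2, u.2) | u in setX Rset [set~ 0]].
Proof.
apply/setP => [[a b]]; rewrite !inE /Nf /=; apply/idP/idP.
  move=> /eqP N0; have [b0|bn0] := eqVneq b 0.
    subst b; move: N0; rewrite !mulr0 expr0n /= !mul0r !addr0 => /eqP.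
    by rewrite expf_eq0 /= => /eqP ->; rewrite eqxx.
  apply/orP; right; apply/imsetP; exists (a / b, b); last by rewrite /= divfK.
  rewrite !inE bn0 andbT /=.
  have -> : (a / b) ^+ 2 + a / b * \tr Y + \det Y =
     (a ^+ 2 + a * b * \tr Y + b ^+ 2 * \det Y) / b ^+ 2 by field.
  by rewrite N0 mul0r.
case/orP.
  by move/eqP => [-> ->]; apply/eqP; ring.
case/imsetP => [[z c]]; rewrite !inE /= => /andP[/eqP Rz cn0] [-> ->].
apply/eqP; rewrite -[RHS](mulr0 (c ^+ 2)) -Rz; ring.
Qed.

Lemma card_Z : #|Zset| = (1 + #|Rset| * #|F|.-1)%N.
Proof.
rewrite Zset_eq cardsU1.
have -> : ((0 : F, 0 : F) \notin [set (u.1*u.2, u.2) | u in setX Rset [set~ 0]]).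
  apply/imsetP => -[[z c]]; rewrite !inE /= => /andP[_ cn0] [_ c0].
  by rewrite c0 eqxx in cn0.
rewrite card_in_imset ?cardsX ?cardsC1 //.
move=> [z c] [z' c']; rewrite !inE /= => /andP[_ cn0] _ [e1 e2].
subst c'; congr (_, _); exact: (mulIf cn0 e1).
Qed.

Lemma card_P : #|Pset| = (#|F| * #|F| - (1 + #|Rset| * #|F|.-1))%N.
Proof.
have -> : Pset = ~: Zset by apply/setP => ab; rewrite !inE.
by rewrite -card_Z; move: (cardsC Zset); rewrite card_prod => <-; rewrite addKn.
Qed.

Definition dmap (g : {'GL_2[F]}) : {unit F} := insubd (1%g : {unit F}) (\det (GLval g)).
Lemma dmapK g : val (dmap g) = \det (GLval g).
Proof. by rewrite /dmap insubdK // unitfE; move: (GL_det g). Qed.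
Lemma dmap_morphic : morphic [set: {'GL_2[F]}] dmap.
Proof.
apply/morphicP => u v _ _; apply: val_inj.
by rewrite val_unitM !dmapK GL_MxE det_mulmx.
Qed.
Definition dmorph := morphm_morphism dmap_morphic.

Lemma ker_dmorph : ('ker dmorph)%g = SL2set F.
Proof.
apply/setP => g; rewrite [RHS]inE; apply/kerP/eqP; rewrite ?inE //=.
  by move=> h; rewrite morphmE in h; rewrite -dmapK h.
by move=> h; apply: val_inj; rewrite morphmE /= dmapK h.
Qed.

Lemma index_S : (#|Sset :&: SL2set F| * #|(dmorph @* Sset)%g|)%N = #|Sset|.
Proof.
rewrite card_morphim setTI ker_dmorph -indexgI.
exact: (Lagrange (subsetIl S_group (SL2 F))).
Qed.

Lemma im_dvd : (#|(dmorph @* Sset)%g| %| #|F|.-1)%N.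
Proof. by rewrite -card_finField_unit; apply: cardSg; apply: subsetT. Qed.

Lemma key_div :
  (#|Rset| = 0 -> (#|F|.+1 %| #|Sset :&: SL2set F|))%N /\ 
  (#|Rset| = 2 -> (#|F|.-1 %| #|Sset :&: SL2set F|))%N.
Proof.
have := index_S; rewrite card_S card_P.
have := im_dvd; have m_gt0 : (0 < #|(dmorph @* Sset)%g|)%N by apply: cardG_gt0.
move: #|(dmorph @* Sset)%g| m_gt0 => m m_gt0 mdvd.
move: #|Sset :&: SL2set F| => k.
have : (0 < #|F|)%N by apply/card_gt0P; exists 0.
case: #|F| mdvd => // p mdvd _ /= E; split => R0; rewrite R0 in E.
  rewrite -(dvdn_pmul2r m_gt0) E.
  have -> : (p.+1 * p.+1 - (1 + 0 * p) = p.+2 * p)%N by nia.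
  by rewrite dvdn_mul.
rewrite -(dvdn_pmul2r m_gt0) E.
have -> : (p.+1 * p.+1 - (1 + 2 * p) = p * p)%N by nia.
by rewrite dvdn_mul.
Qed.
End Key.
End Aux.

Section Main.
Variable F : finFieldType.
Local Open Scope ring_scope.

Lemma nil2 (Y : 'M[F]_2) l : \tr Y = l + l -> \det Y = l^+2 ->
  (Y - l%:M) *m (Y - l%:M) = 0.
Proof.
rewrite tr2 det2 => ht hd.
have h11 : Y 1 1 = l + l - Y 0 0 by rewrite -ht; ring.
have hp : Y 0 1 * Y 1 0 = - (Y 0 0 - l)^+2.
  have -> : Y 0 1 * Y 1 0 = Y 0 0 * Y 1 1 - (Y 0 0 * Y 1 1 - Y 0 1 * Y 1 0) by ring.
  by rewrite hd h11; ring.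
have hp' : Y 1 0 * Y 0 1 = - (Y 0 0 - l)^+2 by rewrite mulrC.
apply: mx2P; rewrite !mul2E !mxE /= ?mulr1n ?mulr0n ?subr0 ?sub0r.
- have -> : (Y 0 0 - l) * (Y 0 0 - l) + Y 0 1 * Y 1 0 = (Y 0 0 - l)^+2 + Y 0 1 * Y 1 0 by ring.
  by rewrite hp; ring.
- rewrite h11; ring.
- rewrite h11; ring.
- have -> : Y 1 0 * Y 0 1 + (Y 1 1 - l) * (Y 1 1 - l) = Y 1 0 * Y 0 1 + (Y 1 1 - l)^+2 by ring.
  by rewrite hp' h11; ring.
Qed.

Lemma powN (N : 'M[F]_2) l n : N *m N = 0 ->
  (l%:M + N) ^+ n.+1 = (l^+n.+1)%:M + (n.+1%:R * l^+n) *: N.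
Proof.
move=> NN; elim: n => [|n IH].
  by rewrite expr1 expr0 mulr1 scale1r.
rewrite exprSr IH -mulmxE mulmxDl !mulmxDr -scalar_mxM mul_scalar_mx -scalemxAl.
rewrite -scalemxAl NN scaler0 addr0 mul_mx_scalar scalerA -exprSr -addrA -scalerDl.
congr (_ + _ *: N); rewrite exprS [_.+2%:R]mulrS; ring.
Qed.

Lemma two_neq0 : (forall k, #|F| != 2^k)%N -> (2%:R : F) != 0.
Proof.
move=> h; apply/negP => /eqP t0.
have c2 : (2 \in [pchar F])%N by rewrite inE /= t0 eqxx.
have E := card_pprimeChar c2.
by move: (h (logn 2 #|pPrimeCharType c2|)); rewrite -E eqxx.
Qed.
End Main.

Section Final.
Variable F : finFieldType.
Local Open Scope ring_scope.

Definition E10 : 'M[F]_2 := \matrix_(i, j) (if (i == 0) && (j == 0) then 1 else 0).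

Lemma E10_ns : forall c, E10 != c%:M.
Proof.
move=> c; apply/negP => /eqP /matrixP h.
have := h 0 0; have := h 1 1; rewrite !mxE /= => h1 h0.
by move: h0; rewrite -h1 => /eqP; rewrite oner_eq0.
Qed.

Lemma R_E10 : #|Rset E10| = 2%N.
Proof.
have -> : Rset E10 = [set 0; -1].
  apply/setP => z; rewrite !inE tr2 det2 !mxE /=.
  have -> : z^+2 + z*(1+0) + (1*0 - 0*0) = z * (z + 1) by ring.
  by rewrite mulf_eq0 addr_eq0.
by rewrite cards2 eq_sym oppr_eq0 oner_eq0.
Qed.

Lemma main_div (x : {'GL_2[F]}) : (forall k, #|F| != 2^k)%N -> x \in SL2 F -> (2.-elt x)%g ->
  (#|F|.-1 %| #|('C_(SL2 F)[x])%g| \/ #|F|.+1 %| #|('C_(SL2 F)[x])%g|)%N.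
Proof.
move=> hq xS x2.
have t2 := two_neq0 hq.
have gen : forall Y (nsY : forall c, Y != c%:M),
    (S_group Y :&: SL2 F)%G \subset ('C_(SL2 F)[x])%G ->
    #|Rset Y| = 0%N \/ #|Rset Y| = 2%N ->
    (#|F|.-1 %| #|('C_(SL2 F)[x])%g| \/ #|F|.+1 %| #|('C_(SL2 F)[x])%g|)%N.
  move=> Y nsY sub; case: (key_div nsY) => h1 h2 [R0|R2].
    by right; apply: dvdn_trans (cardSg sub); apply: h1.
  by left; apply: dvdn_trans (cardSg sub); apply: h2.
case: (boolP [exists c : F, GLval x == c%:M]).
  case/existsP => c /eqP Xc.
  apply: (gen E10 (@E10_ns) _ (or_intror R_E10)).
  apply/subsetP => g /setIP [_ gSL]; rewrite inE gSL /=; apply/cent1P.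
  by apply: val_inj; change (GLval (g * x)%g = GLval (x * g)%g); rewrite !GL_MxE Xc scalar_mxC.
move=> nsb.
have nsX : forall c, GLval x != c%:M.
  by move=> c; apply/negP => h; move/negP: nsb; apply; apply/existsP; exists c.
set X := GLval x in nsX *.
apply: (gen X nsX).
  apply/subsetP => g /setIP [gS gSL]; rewrite inE gSL /=; apply/cent1P.
  apply: val_inj; change (GLval (g * x)%g = GLval (x * g)%g); rewrite !GL_MxE; move: gS; rewrite inE => /existsP[ab /eqP ->].
  by rewrite /Mab commM2.
case: (set_0Vmem (Rset X)) => [R0 | [z0 z0R]].
  by left; rewrite R0 cards0.
right.
have z0R' := z0R; rewrite inE in z0R'; move/eqP: z0R' => z0R'.
case: (eqVneq (z0 + z0 + \tr X) 0) => hz; last first.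
  have -> : Rset X = [set z0; - \tr X - z0].
    apply/setP => z; rewrite !inE; apply/idP/idP.
      move=> Rz.
      have h : (z - z0) * (z + \tr X + z0) = (z^+2 + z*\tr X + \det X) - (z0^+2 + z0*\tr X + \det X) by ring.
      rewrite (eqP Rz) z0R' subrr in h.
      move/eqP: h; rewrite mulf_eq0 subr_eq0 => /orP[->//|h].
      by rewrite -addrA addr_eq0 opprD in h; rewrite h orbT.
    case/orP => /eqP ->; first by rewrite z0R'.
    by rewrite -z0R'; apply/eqP; ring.
  rewrite cards2; congr (_.+1); apply/eqP; rewrite eqb1.
  apply: contra hz => /eqP e; apply/eqP; rewrite {2}e; ring.
exfalso.
pose l := - z0.
have ht : \tr X = l + l.
  by rewrite /l -opprD; apply/eqP; rewrite -addr_eq0 addrC hz.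
have d1 : \det X = 1 by move: xS; rewrite inE => /eqP.
have hd : \det X = l^+2.
  have -> : \det X = (z0^+2 + z0 * \tr X + \det X) - (z0^+2 + z0*\tr X) by ring.
  by rewrite z0R' ht /l; ring.
have l0 : l != 0.
  by apply/eqP => l0; move: d1; rewrite hd l0 expr0n /= => /eqP; rewrite eq_sym oner_eq0.
have NN := nil2 ht hd.
have Xn : X ^+ #[x]%g = 1.
  by rewrite /X -val_unitX expg_order.
have XlN : X = l%:M + (X - l%:M) by rewrite addrC subrK.
have eo := part_pnat_id x2; rewrite p_part in eo.
have n0 : (#[x]%g%:R : F) != 0 by rewrite -eo natrX expf_eq0 (negbTE t2) andbF.
move: Xn n0; have := order_gt0 x; case: #[x]%g => // k _ Xn n0.
move: Xn; rewrite XlN powN //.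
set c := (k.+1%:R * l ^+ k).
have [c0|cn0] := eqVneq c 0.
  move=> _; move/eqP: c0; rewrite /c mulf_eq0 expf_eq0 (negbTE l0) andbF orbF.
  by rewrite (negbTE n0).
move=> e.
have e2 : c *: (X - l%:M) = (1 - l ^+ k.+1)%:M.
  by rewrite [RHS]raddfB /= idmxE -e addrAC subrr add0r.
have e3 : X - l%:M = (c^-1 * (1 - l ^+ k.+1))%:M.
  by rewrite -scale_scalar_mx -e2 scalerA mulVf // scale1r.
by move: (nsX (l + c^-1 * (1 - l ^+ k.+1))); rewrite {1}XlN e3 raddfD eqxx.
Qed.
End Final.


Local Open Scope group_scope.

Theorem theorem6p5 (F : finFieldType) (x : {'GL_2[F]}) :
  (forall k : nat, [/\ (#|F|.-1 != 2 ^ k)%N, (#|F| != 2 ^ k)%N & (#|F|.+1 != 2 ^ k)%N]) ->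
  x \in SL2 F -> 2.-elt x ->
  ((#|F|.-1 %| #|'C_(SL2 F)[x]|)%N || (#|F|.+1 %| #|'C_(SL2 F)[x]|)%N)
  /\ ~~ 2.-group 'C_(SL2 F)[x].
Proof.
move=> hq xS x2.
have hq' : forall k, (#|F| != 2 ^ k)%N by move=> k; case: (hq k).
have hdiv := main_div hq' xS x2.
have hd : ((#|F|.-1 %| #|'C_(SL2 F)[x]|) || (#|F|.+1 %| #|'C_(SL2 F)[x]|))%N.
  by case: hdiv => ->; rewrite ?orbT.
split => //.
apply/negP => pC.
case/orP: hd => hd.
  have pn := pnat_dvd hd pC.
  have e := part_pnat_id pn; rewrite p_part in e.
  by case: (hq (logn 2 #|F|.-1)); rewrite e eqxx.
have pn := pnat_dvd hd pC.
have e := part_pnat_id pn; rewrite p_part in e.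
by case: (hq (logn 2 #|F|.+1)); rewrite e eqxx.
Qed.
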